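(* Let $R$ be a commutative ring with unit, $Q=(V,E,X,s,t,l)$ a labelled quiver, and let $f,g\in R\langle X\rangle$ be compatible with $Q$ such that $s(f)\cap t(g)\neq\emptyset$. Then $fg$ is compatible with $Q$ and \[\sigma(fg)\supseteq\{(u,w)\in s(g)\times t(f) \mid \exists v\in s(f)\cap t(g): (u,v)\in\sigma(g)\wedge (v,w)\in\sigma(f)\}.\] If in addition $f$ and $g$ are uniformly compatible with $Q$ and $fg\neq 0$, then equality holds and $fg$ is uniformly compatible as well.
   Context: $R\langle X\rangle$ is the free algebra of noncommutative polynomials over $R$ in indeterminates $X$, with monomials the words in $\langle X\rangle$ (including the empty word $1$); $\operatorname{supp}(f)$ is the set of monomials with nonzero coefficient. A labelled quiver $Q=(V,E,X,s,t,l)$ has vertices $V$, edges $E$, source/target maps $s,t:E\to V$ and labelling $l:E\to X$. A nonempty path $p=e_n\cdots e_1$ (with $s(e_{i+1})=t(e_i)$) has label $l(e_n)\cdots l(e_1)$, source $s(e_1)$, target $t(e_n)$; each vertex $v$ has an empty path with label $1$ and source and target $v$. For a monomial $m$, $\sigma(m)=\{(s(p),t(p)) : p \text{ a path with } l(p)=m\}$; for a polynomial $f$, $\sigma(f)=\bigcap_{m\in\operatorname{supp}(f)}\sigma(m)$. The sets of sources and targets of $f$ are $s(f)=\{v\in V\mid \exists w: (v,w)\in\sigma(f)\}$ and $t(f)=\{w\in V\mid\exists v:(v,w)\in\sigma(f)\}$. $f$ is compatible with $Q$ if $\sigma(f)\neq\emptyset$, and uniformly compatible if it is compatible and all $m\in\operatorname{supp}(f)$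 have the same set $\sigma(m)$. *)

(* Defs.v *)
From mathcomp Require Import all_boot all_order all_algebra.
From Stdlib Require List.
Set Implicit Arguments. Unset Strict Implicit. Unset Printing Implicit Defensive.
Import GRing.Theory.
Local Open Scope ring_scope.

(* Noncommutative polynomials R<X>: coefficient functions on words (seq X),
   the empty word [::] being the monomial 1.  Elements of R<X> are those with
   finite support (hypothesis [ncfinsupp]). *)
Definition ncpoly (R : pzRingType) (X : Type) := seq X -> R.

Definition ncfinsupp (R : pzRingType) (X : Type) (f : ncpoly R X) : Prop :=
  exists S : seq (seq X), forall m, f m != 0 -> Stdlib.Lists.List.In m S.

Definition ncmul (R : pzRingType) (X : Type) (f g : ncpoly R X) : ncpoly R X :=
  fun w => \sum_(i < (size w).+1) f (take i w) * g (drop i w).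

Section Quiver.
Variables (V E X : Type) (s t : E -> V) (l : E -> X).

(* A nonempty path e_n ... e_1 is represented by the list [:: e_n; ...; e_1];
   consecutiveness: s(e_{i+1}) = t(e_i). *)
Fixpoint is_path (p : seq E) : Prop :=
  match p with
  | a :: ((b :: _) as r) => s a = t b /\ is_path r
  | _ => True
  end.

Definition sigma_mon (m : seq X) (v w : V) : Prop :=
  (m = [::] /\ v = w) \/
  exists (e : E) (p : seq E),
    is_path (e :: p) /\ map l (e :: p) = m /\ s (last e p) = v /\ t e = w.

Definition sigma_pol (R : pzRingType) (f : ncpoly R X) (v w : V) : Prop :=
  forall m, f m != 0 -> sigma_mon m v w.

Definition sources (R : pzRingType) (f : ncpoly R X) (v : V) : Prop :=
  exists w, sigma_pol f v w.

Definition targets (R : pzRingType) (f : ncpoly R X) (w : V) : Prop :=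
  exists v, sigma_pol f v w.

Definition compatible (R : pzRingType) (f : ncpoly R X) : Prop :=
  exists v w, sigma_pol f v w.

Definition unif_compatible (R : pzRingType) (f : ncpoly R X) : Prop :=
  compatible f /\
  forall m m', f m != 0 -> f m' != 0 ->
    forall v w, sigma_mon m v w <-> sigma_mon m' v w.

End Quiver.

(* Main.v *)
Require Import Defs.
From mathcomp Require Import all_boot all_order all_algebra.
From Stdlib Require Import Classical.
Set Implicit Arguments. Unset Strict Implicit. Unset Printing Implicit Defensive.
Import GRing.Theory.
Local Open Scope ring_scope.

Section Aux.
Variables (V E X : Type) (s t : E -> V) (l : E -> X).

Fixpoint walk (q : seq E) (v w : V) : Prop :=
  match q with
  | [::] => v = w
  | e :: p => t e = w /\ walk p v (s e)
  end.

Lemma walk_cons e p v w :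
  walk (e :: p) v w <-> t e = w /\ is_path s t (e :: p) /\ s (last e p) = v.
Proof.
elim: p e w => [|b r IH] e w.
  by simpl; split; [case=> -> -> | case=> -> [_ ->]].
have -> : walk (e :: b :: r) v w = (t e = w /\ walk (b :: r) v (s e)) by [].
rewrite (IH b (s e)) /=.
split.
  by case=> -> [-> [Hp ->]].
by case=> -> [[-> Hp] ->].
Qed.

Lemma sigma_monE m v w :
  sigma_mon s t l m v w <-> exists q, map l q = m /\ walk q v w.
Proof.
split.
  case=> [[-> ->]|[e [p [Hp [Hm [Hs Ht]]]]]].
    by exists [::].
  exists (e :: p); split => //; apply/walk_cons; done.
case=> [[|e p] [Hm Hw]].
  by left; rewrite -Hm.
right; exists e, p; move/walk_cons: Hw => [? [? ?]]; done.
Qed.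

Lemma walk_cat q1 q2 u w :
  walk (q1 ++ q2) u w <-> exists v, walk q2 u v /\ walk q1 v w.
Proof.
elim: q1 w => [|e r IH] w /=.
  by split; [move=> H; exists w | case=> v [H Ev]; rewrite -Ev].
rewrite IH; split.
  by case=> -> [v [H1 H2]]; exists v.
by case=> v [H1 [-> H2]]; split => //; exists v.
Qed.

Lemma sigma_concat a b u v w :
  sigma_mon s t l b u v -> sigma_mon s t l a v w ->
  sigma_mon s t l (a ++ b) u w.
Proof.
move=> /sigma_monE [q2 [<- H2]] /sigma_monE [q1 [<- H1]].
apply/sigma_monE; exists (q1 ++ q2); rewrite map_cat; split => //.
by apply/walk_cat; exists v.
Qed.

Lemma sigma_split a b u w :
  sigma_mon s t l (a ++ b) u w ->
  exists v, sigma_mon s t l b u v /\ sigma_mon s t l a v w.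
Proof.
move=> /sigma_monE [q [Hq Hw]].
rewrite -(cat_take_drop (size a) q) in Hw.
move/walk_cat: Hw => [v [H2 H1]]; exists v; split; apply/sigma_monE.
  exists (drop (size a) q); split => //.
  by rewrite map_drop Hq drop_size_cat.
exists (take (size a) q); split => //.
by rewrite map_take Hq take_size_cat.
Qed.

Variable R : comPzRingType.

Lemma mul_supp (f g : ncpoly R X) m : ncmul f g m != 0 ->
  exists i, f (take i m) != 0 /\ g (drop i m) != 0.
Proof.
case: (boolP [exists i : 'I_(size m).+1, (f (take i m) != 0) && (g (drop i m) != 0)]).
  by move=> /existsP [i /andP [H1 H2]]; exists i.
rewrite negb_exists => /forallP H.
rewrite /ncmul big1 ?eqxx // => i _.
move: (H i); rewrite negb_and !negbK; case/orP => /eqP ->; by rewrite ?mul0r ?mulr0.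
Qed.

Lemma incl (f g : ncpoly R X) u v w :
  sigma_pol s t l g u v -> sigma_pol s t l f v w ->
  sigma_pol s t l (ncmul f g) u w.
Proof.
move=> Hg Hf m /mul_supp [i [H1 H2]].
rewrite -(cat_take_drop i m); apply: (sigma_concat (v := v)); auto.
Qed.

Lemma unif_pol (f : ncpoly R X) m v w :
  unif_compatible s t l f -> f m != 0 -> sigma_mon s t l m v w ->
  sigma_pol s t l f v w.
Proof.
by move=> [_ Hu] Hm Hs m' Hm'; apply/(Hu m m' Hm Hm').
Qed.

Lemma rev_incl (f g : ncpoly R X) m u w :
  unif_compatible s t l f -> unif_compatible s t l g ->
  ncmul f g m != 0 -> sigma_mon s t l m u w ->
  exists v, sigma_pol s t l g u v /\ sigma_pol s t l f v w.
Proof.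
move=> Uf Ug /mul_supp [i [H1 H2]].
rewrite -(cat_take_drop i m) => /sigma_split [v [Hb Ha]].
exists v; split; [exact: (unif_pol Ug H2 Hb) | exact: (unif_pol Uf H1 Ha)].
Qed.

End Aux.

Theorem lemma3p7 (R : comPzRingType) (V E X : Type)
  (s t : E -> V) (l : E -> X) (f g : ncpoly R X) :
  ncfinsupp f -> ncfinsupp g ->
  compatible s t l f -> compatible s t l g ->
  (exists v, sources s t l f v /\ targets s t l g v) ->
  compatible s t l (ncmul f g) /\
  (forall u w,
     (sources s t l g u /\ targets s t l f w /\
      exists v, (sources s t l f v /\ targets s t l g v) /\
                sigma_pol s t l g u v /\ sigma_pol s t l f v w) ->
     sigma_pol s t l (ncmul f g) u w) /\
  (unif_compatible s t l f -> unif_compatible s t l g ->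
   ~ (forall w, ncmul f g w = 0) ->
   (forall u w,
      sigma_pol s t l (ncmul f g) u w <->
      (sources s t l g u /\ targets s t l f w /\
       exists v, (sources s t l f v /\ targets s t l g v) /\
                 sigma_pol s t l g u v /\ sigma_pol s t l f v w)) /\
   unif_compatible s t l (ncmul f g)).
Proof.
move=> _ _ _ _ [v [[w Hw] [u Hu]]].
have C : compatible s t l (ncmul f g) by exists u, w; exact: (incl Hu Hw).
split => //; split.
  by move=> u' w' [_ [_ [v' [_ [H1 H2]]]]]; exact: (incl H1 H2).
move=> Uf Ug Hnz.
have [m0 Hm0] : exists m, ncmul f g m != 0.
  apply: NNPP => Hn; apply: Hnz => m; apply/eqP; apply: NNPP => Hm.
  by apply: Hn; exists m; apply/negP.
split.
  move=> u' w'; split.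
    move=> Hs; have [v' [H1 H2]] := rev_incl Uf Ug Hm0 (Hs m0 Hm0).
    split; first by exists v'.
    split; first by exists v'.
    exists v'; split => //; split; [by exists w' | by exists u'].
  by move=> [_ [_ [v' [_ [H1 H2]]]]]; exact: (incl H1 H2).
split => // m m' Hm Hm' a b; split.
  move=> Hs; have [v' [H1 H2]] := rev_incl Uf Ug Hm Hs.
  exact: (incl H1 H2 Hm').
move=> Hs; have [v' [H1 H2]] := rev_incl Uf Ug Hm' Hs.
exact: (incl H1 H2 Hm).
Qed.
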